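(* For every integer $p \ge 1$ there exist an integer $k$ and a $k$-colourable $(K_4, \text{diamond}, \text{paw}, \text{co-claw}, \text{co-diamond})$-free graph $G$ that is not $(k+p)$-mixing.
   Context: All graphs are finite and simple. A $k$-colouring of $G$ is a map $\alpha: V(G)\to\{1,\dots,k\}$ with $\alpha(u)\neq\alpha(v)$ for every edge $uv$; $G$ is $k$-colourable if one exists. The reconfiguration graph $\mathcal{R}_k(G)$ has the $k$-colourings of $G$ as vertices, two being adjacent if they differ on exactly one vertex; $G$ is $k$-mixing if $\mathcal{R}_k(G)$ is connected. A graph is $\mathcal{H}$-free if it contains no induced subgraph isomorphic to any member of $\mathcal{H}$. The diamond is $K_4$ minus one edge; the paw is a triangle with a pendant vertex attached to one triangle vertex; the co-claw is $K_3+K_1$ (a triangle plus an isolated vertex); the co-diamond is $K_2+2K_1$ (one edge plus two isolated vertices). *)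

(* Defs.v *)
From mathcomp Require Import all_boot.
From Stdlib Require Import Relation_Operators.
Set Implicit Arguments. Unset Strict Implicit. Unset Printing Implicit Defensive.

Definition simple_graph (T : finType) (e : rel T) : Prop :=
  symmetric e /\ irreflexive e.

(* k-colourings: maps T -> {1..k}, represented as T -> 'I_k. *)
Definition is_colouring (T : finType) (e : rel T) (k : nat) (a : {ffun T -> 'I_k}) : Prop :=
  forall u v, e u v -> a u != a v.

Definition colourable (T : finType) (e : rel T) (k : nat) : Prop :=
  exists a : {ffun T -> 'I_k}, is_colouring e a.

Definition recolour_adj (T : finType) (e : rel T) (k : nat)
  (a b : {ffun T -> 'I_k}) : Prop :=
  is_colouring e a /\ is_colouring e b /\ #|[set v | a v != b v]| = 1.

Definition mixing (T : finType) (e : rel T) (k : nat) : Prop :=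
  forall a b : {ffun T -> 'I_k}, is_colouring e a -> is_colouring e b ->
    clos_refl_trans _ (@recolour_adj T e k) a b.

Definition contains_induced (S : finType) (h : rel S) (T : finType) (e : rel T) : Prop :=
  exists f : S -> T, injective f /\ forall x y, h x y = e (f x) (f y).

Definition graph4 (s : seq (nat * nat)) : rel 'I_4 :=
  fun x y => ((nat_of_ord x, nat_of_ord y) \in s) || ((nat_of_ord y, nat_of_ord x) \in s).

Definition K4_g : rel 'I_4 := graph4 [:: (0,1); (0,2); (0,3); (1,2); (1,3); (2,3)].
Definition diamond_g : rel 'I_4 := graph4 [:: (0,2); (0,3); (1,2); (1,3); (2,3)].
Definition paw_g : rel 'I_4 := graph4 [:: (0,1); (0,2); (1,2); (0,3)].
Definition coclaw_g : rel 'I_4 := graph4 [:: (0,1); (0,2); (1,2)].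
Definition codiamond_g : rel 'I_4 := graph4 [:: (0,1)].

Definition forbidden_free (T : finType) (e : rel T) : Prop :=
  ~ contains_induced K4_g e /\ ~ contains_induced diamond_g e /\
  ~ contains_induced paw_g e /\ ~ contains_induced coclaw_g e /\
  ~ contains_induced codiamond_g e.

(* Main.v *)
Require Import Defs.
From mathcomp Require Import all_boot.
From Stdlib Require Import Relation_Operators Operators_Properties.
Set Implicit Arguments. Unset Strict Implicit. Unset Printing Implicit Defensive.

Section G.
Variable n : nat.
Definition V := (bool * 'I_n)%type.
Definition eG : rel V := fun u v => (u.1 != v.1) && (u.2 != v.2).

Lemma eG_simple : simple_graph eG.
Proof.
split.
- move=> [x i] [y j]; rewrite /eG /=; by rewrite eq_sym [j == i]eq_sym.
- move=> [x i]; by rewrite /eG /= eqxx.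
Qed.

Lemma tri_free u v w : eG u v -> eG v w -> eG u w -> False.
Proof.
case: u v w => [[] i] [[] j] [[] l]; by rewrite /eG /= ?andbF.
Qed.

Lemma nadj u v : ~~ eG u v -> u.1 = v.1 \/ u.2 = v.2.
Proof.
rewrite /eG negb_and !negbK => /orP [/eqP ->|/eqP ->]; auto.
Qed.

Lemma codiam u0 u1 u2 u3 : eG u0 u1 -> ~~ eG u0 u2 -> ~~ eG u0 u3 ->
  ~~ eG u1 u2 -> ~~ eG u1 u3 -> ~~ eG u2 u3 -> u2 != u3 -> False.
Proof.
move=> H01 n02 n03 n12 n13 n23 hne.
move: H01 (nadj n02) (nadj n03) (nadj n12) (nadj n13) (nadj n23) hne; clear n02 n03 n12 n13 n23.
case: u0 u1 u2 u3 => [x0 i0] [x1 i1] [x2 i2] [x3 i3].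
rewrite /eG /= => /andP [/eqP hx /eqP hi] h02 h03 h12 h13 h23 hne.
have Hb : forall a b c : bool, a <> b -> (c = a \/ c = b).
  by case; case; case; auto.
have c2 : (x2 = x0 /\ i2 = i1) \/ (x2 = x1 /\ i2 = i0).
  case: h02 => h; case: h12 => h';
  first [congruence | (left; split; congruence) | (right; split; congruence)].
have c3 : (x3 = x0 /\ i3 = i1) \/ (x3 = x1 /\ i3 = i0).
  case: h03 => h; case: h13 => h';
  first [congruence | (left; split; congruence) | (right; split; congruence)].
move: hne h23.
case: c2 => [[-> ->]|[-> ->]]; case: c3 => [[-> ->]|[-> ->]];
  rewrite ?eqxx // => _ [] h; congruence.
Qed.
End G.

Definition o4 (i : nat) (H : i < 4) : 'I_4 := Ordinal H.

Lemma tri_ind n (h : rel 'I_4) a b c :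
  h a b -> h b c -> h a c -> ~ contains_induced h (@eG n).
Proof.
move=> hab hbc hac [f [_ H]].
apply: (@tri_free n (f a) (f b) (f c)); by rewrite -H.
Qed.

Lemma ff n : forbidden_free (@eG n).
Proof.
split; [|split; [|split; [|split]]].
- exact: (@tri_ind n K4_g (@o4 0 isT) (@o4 1 isT) (@o4 2 isT)).
- exact: (@tri_ind n diamond_g (@o4 0 isT) (@o4 2 isT) (@o4 3 isT)).
- exact: (@tri_ind n paw_g (@o4 0 isT) (@o4 1 isT) (@o4 2 isT)).
- exact: (@tri_ind n coclaw_g (@o4 0 isT) (@o4 1 isT) (@o4 2 isT)).
- move=> [f [finj H]].
  apply: (@codiam n (f (@o4 0 isT)) (f (@o4 1 isT)) (f (@o4 2 isT)) (f (@o4 3 isT)));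
    rewrite -?H //.
  apply/negP => /eqP /finj //.
Qed.

Definition acol n : {ffun V n -> 'I_n} := [ffun v => v.2].

Lemma acol_ok n : is_colouring (@eG n) (acol n).
Proof. move=> [x i] [y j] /andP [_ hij]; by rewrite !ffunE. Qed.

Lemma frozen n c : ~ recolour_adj (@eG n) (acol n) c.
Proof.
move=> [_ [cok /eqP/cards1P [v hv]]].
have hvin : v \in [set v | acol n v != c v] by rewrite hv set11.
rewrite inE ffunE in hvin.
case: v hv hvin => x i hv hvin.
set w : V n := (~~ x, c (x, i)).
have ew : eG (x, i) w by rewrite /eG /= eq_sym hvin andbT; case: x {hv hvin w}.
have hw : w \notin [set v | acol n v != c v].
  by rewrite hv inE /w; apply/eqP => -[]; case: x {hv hvin ew w}.
rewrite inE ffunE negbK /= in hw.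
by move: (cok _ _ ew); rewrite -(eqP hw) eqxx.
Qed.

Theorem theorem5 : forall p : nat, 1 <= p ->
  exists (k : nat) (T : finType) (e : rel T),
    simple_graph e /\ colourable e k /\ forbidden_free e /\ ~ mixing e (k + p).
Proof.
move=> p _.
exists 2, (V (2 + p)), (@eG (2 + p)).
split; first exact: eG_simple.
split.
  exists [ffun v : V (2 + p) => if v.1 then (@Ordinal 2 0 isT) else (@Ordinal 2 1 isT)].
  by move=> [[] i] [[] j]; rewrite /eG /= !ffunE.
split; first exact: ff.
move=> hmix.
pose b : {ffun V (2 + p) -> 'I_(2 + p)} :=
  [ffun v : V (2 + p) => if v.1 then (@Ordinal (2 + p) 0 isT) else (@Ordinal (2 + p) 1 isT)].
have bok : is_colouring (@eG (2 + p)) b.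
  by move=> [[] i] [[] j]; rewrite /eG /= !ffunE.
have hr := clos_rt_rt1n _ _ _ _ (hmix _ _ (@acol_ok (2 + p)) bok).
inversion hr as [Heq|y z hy _ Heq].
- have := congr1 (fun g : {ffun V (2 + p) -> 'I_(2 + p)} => g (true, Ordinal (isT : 1 < 2 + p))) Heq.
  by rewrite /= !ffunE.
- exact: (@frozen (2 + p) y).
Qed.
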